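(* Let $T>0$, $C_1>0$, and let $H:(0,1)^n\times\mathbb S(n)\to\mathbb R^n$, $B:(0,1)^n\times\mathbb S(n)\to\mathbb S(n)$ be $C^1$ with $H_i(\mu,p)\ge-C_1$ for all $(\mu,p)$ and $i$; let $g:[0,1]^n\to\mathbb R^n$, $\lambda\in[0,1]$, $t\in[0,T)$, $\mu\in\mathcal P_0(\mathbb G)$. If $(\phi,\rho):[t,T]\to\mathbb R^n\times(0,1)^n$ is a classical solution of $$\dot\phi=H(\rho,\lambda\nabla_{\mathbb G}\phi)-\Delta_{\mathbb G}\phi,\quad\dot\rho=\nabla_{\mathbb G}\cdot B(\rho,\lambda\nabla_{\mathbb G}\phi)+\Delta_{\mathbb G}\rho\ \text{ on }(t,T),\quad\phi(T)=g(\rho(T)),\ \rho(t)=\mu,$$ then $\max_{1\le i\le n}\phi_i(s)\le C_1(T-s)+\max_{1\le i\le n}\phi_i(T)$ for all $s\in[t,T]$.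
   Context: $\mathbb G$: finite connected simple undirected graph on $\{1,\dots,n\}$ with symmetric edge weights $\omega_{ij}>0$ iff $(i,j)\in\mathbb E$. $\mathbb S(n)$: skew-symmetric matrices. $(\nabla_{\mathbb G}u)^{ij}=\sqrt{\omega_{ij}}(u^i-u^j)$, $(\nabla_{\mathbb G}\cdot m)^i=\sum_{j\ne i}\sqrt{\omega_{ij}}m^{ji}$, $(\Delta_{\mathbb G}u)^i=\sum_j\omega_{ij}(u^j-u^i)$. $\mathcal P_0(\mathbb G)$: probability vectors with positive entries. Classical solution: a $C^1$ pair satisfying the system pointwise. *)

(* Defs.v *)
From mathcomp Require Import all_boot all_order all_algebra.
From mathcomp Require Import all_classical all_reals all_analysis.
Set Implicit Arguments. Unset Strict Implicit. Unset Printing Implicit Defensive.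
Import Order.TTheory GRing.Theory Num.Theory numFieldNormedType.Exports.
Local Open Scope classical_set_scope.
Local Open Scope ring_scope.

Section Defs.
Variable R : realType.
Variable m : nat. (* vertices are 'I_m *)

(* weighted graph given by its weight matrix: omega i j > 0 iff (i,j) is an edge *)
Definition weighted_graph (w : 'M[R]_m) : Prop :=
  (forall i j, w i j = w j i) /\ (forall i, w i i = 0) /\ (forall i j, 0 <= w i j).
Definition connected_graph (w : 'M[R]_m) : Prop :=
  forall i j, connect [rel a b | 0 < w a b] i j.

(* skew-symmetric matrices S(n) *)
Definition skew_symm (p : 'M[R]_m) : Prop := p^T = - p.
Definition skew_part (p : 'M[R]_m) : 'M[R]_m := 2^-1 *: (p - p^T).

Definition gradG (w : 'M[R]_m) (u : 'rV[R]_m) : 'M[R]_m :=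
  \matrix_(i, j) (Num.sqrt (w i j) * (u ord0 i - u ord0 j)).
Definition divG (w : 'M[R]_m) (q : 'M[R]_m) : 'rV[R]_m :=
  \row_i \sum_(j < m | j != i) Num.sqrt (w i j) * q j i.
Definition lapG (w : 'M[R]_m) (u : 'rV[R]_m) : 'rV[R]_m :=
  \row_i \sum_(j < m) w i j * (u ord0 j - u ord0 i).

Definition P0 (mu : 'rV[R]_m) : Prop :=
  (forall i, 0 < mu ord0 i) /\ \sum_(i < m) mu ord0 i = 1.

Definition in_open_cube (x : 'rV[R]_m) : Prop := forall i, 0 < x ord0 i < 1.

(* the domain (0,1)^n x M_n (open); functions on (0,1)^n x S(n) are
   extended to it through the projection onto the skew part *)
Definition cubeM : set ('rV[R]_m * 'M[R]_m) := [set x | in_open_cube x.1].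

Definition C1_on (V W : normedModType R) (U : set V) (f : V -> W) : Prop :=
  (forall x, U x -> differentiable f x) /\
  (forall v, {within U, continuous (fun x => 'D_v f x)}).

Definition C1_cube_skew (W : normedModType R) (F : 'rV[R]_m -> 'M[R]_m -> W) : Prop :=
  C1_on cubeM (fun x : 'rV[R]_m * 'M[R]_m => F x.1 (skew_part x.2)).

Definition C1_interval (V : normedModType R) (a b : R) (f f' : R -> V) : Prop :=
  (forall s, a <= s <= b ->
     h^-1 *: (f (s + h) - f s) @[h --> within [set h | a <= s + h <= b] (0 : R)^']
       --> f' s) /\
  {within [set s | a <= s <= b], continuous f'}.

End Defs.

Definition vmax (R : realType) (m : nat) (v : 'rV[R]_m.+1) : R :=
  \big[Num.max/v ord0 ord0]_(i < m.+1) v ord0 i.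

(* Main.v *)
Require Import Defs.
From mathcomp Require Import all_boot all_order all_algebra.
From mathcomp Require Import all_classical all_reals all_analysis.
From mathcomp Require Import lra ring.
Import Order.TTheory GRing.Theory Num.Theory numFieldNormedType.Exports.
Set Implicit Arguments. Unset Strict Implicit. Unset Printing Implicit Defensive.
Local Open Scope classical_set_scope.
Local Open Scope ring_scope.

Section A.
Variable R : realType.
Lemma mono_sup (a b : R) (G : R -> R) :
  a < b ->
  (forall s, a <= s <= b -> forall e, 0 < e -> exists2 d, 0 < d &
     forall r, a <= r <= b -> `|r - s| < d -> `|G r - G s| < e) ->
  (forall s, a < s < b -> exists h, [/\ 0 < h, s + h <= b & G s < G (s + h)]) ->
  forall s, a <= s <= b -> G s <= G b.
Proof.
move=> ab Gc Gd.
have main : forall s0, a < s0 <= b -> G s0 <= G b.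
  move=> s0 /andP[ha0 s0b].
  pose A := [set r | s0 <= r <= b /\ G s0 <= G r].
  have A0 : A !=set0 by exists s0; split; [apply/andP; split => //|].
  have Aub : ubound A b by move=> r [/andP[_ ->]].
  have hs : has_sup A by split => //; exists b.
  have s0s : s0 <= sup A by apply: sup_upper_bound => //; split; [apply/andP; split|].
  have sb : sup A <= b by apply: ge_sup.
  have Gs : G s0 <= G (sup A).
    rewrite leNgt; apply/negP => Hlt.
    have i1 : a <= sup A <= b by apply/andP; split; lra.
    have i2 : 0 < G s0 - G (sup A) by lra.
    have [d d0 Hd] := Gc (sup A) i1 _ i2.
    have [r [/andP[s0r rb] Gr] rs] := sup_adherent d0 hs.
    have rls : r <= sup A by apply: sup_upper_bound => //; split => //; apply/andP; split.
    have : `|G r - G (sup A)| < G s0 - G (sup A).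
      apply: Hd; first by apply/andP; split; lra.
      rewrite ltr_norml; apply/andP; split; lra.
    rewrite ltr_norml; lra.
  have : sup A = b.
    apply/eqP; rewrite eq_le sb /=; rewrite leNgt; apply/negP => Hlt.
    have [h [h0 hb Gh]] := Gd (sup A) ltac:(apply/andP; split; lra).
    have : sup A + h <= sup A.
      apply: sup_upper_bound => //; split; [apply/andP; split|]; lra.
    lra.
  by move=> <-.
move=> s /andP[has sb].
have [->|ne] := eqVneq s a; last first.
  by apply: main; apply/andP; split => //; rewrite lt_neqAle eq_sym ne has.
rewrite leNgt; apply/negP => Hlt.
have i1 : a <= a <= b by apply/andP; split; lra.
have i2 : 0 < G a - G b by lra.
have [d d0 Hd] := Gc a i1 _ i2.
pose r := Num.min (a + d / 2) b.
have ar : a < r <= b.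
  rewrite /r; apply/andP; split; first by rewrite lt_min; apply/andP; split; lra.
  by rewrite ge_min lexx orbT.
have rd : r <= a + d / 2 by rewrite /r ge_min lexx.
have := main r ar.
have : `|G r - G a| < G a - G b.
  apply: Hd; first by apply/andP; split; lra.
  rewrite ltr_norml; apply/andP; split; lra.
rewrite ltr_norml; lra.
Qed.
Lemma C1_eps n (t T : R) (f f' : R -> 'rV[R]_n.+1) : C1_interval t T f f' ->
  forall s, t <= s <= T -> forall e, 0 < e -> exists2 d, 0 < d &
   forall h, h != 0 -> t <= s + h <= T -> `|h| < d ->
     `|f' s - h^-1 *: (f (s + h) - f s)| < e.
Proof.
move=> [Hd _] s hs e e0.
move: (Hd s hs) => /cvgr_dist_lt /(_ e e0).
rewrite /prop_near1 /within /=.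
move=> /nbhs_ballP [d d0 Hb]; exists d => // h h0 hD hd.
apply: Hb => //.
by rewrite /ball /= sub0r normrN.
Qed.
Lemma vmax_ge n (v : 'rV[R]_n.+1) i : v ord0 i <= vmax v.
Proof. by rewrite /vmax; apply: le_bigmax. Qed.

Lemma vmax_le n (v : 'rV[R]_n.+1) c : (forall i, v ord0 i <= c) -> vmax v <= c.
Proof. move=> Hc; rewrite /vmax; apply: bigmax_le => // i _; exact: Hc. Qed.

Lemma vmax_arg n (v : 'rV[R]_n.+1) : exists i, vmax v = v ord0 i.
Proof.
rewrite /vmax; apply: (big_ind (fun x => exists i, x = v ord0 i)).
- by exists ord0.
- move=> x y [i ->] [j ->]; rewrite /Num.max; case: ifP => _; [by exists j|by exists i].
- by move=> i _; exists i.
Qed.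

Lemma comp_le_norm n (v : 'rV[R]_n.+1) i : `|v ord0 i| <= `|v|.
Proof.
have -> : `|v| = mx_norm v by [].
rewrite mx_normrE; exact: (le_bigmax _ _ (ord0, i)).
Qed.

Lemma vmax_lip n (u v : 'rV[R]_n.+1) : vmax u <= vmax v + `|u - v|.
Proof.
apply: vmax_le => i.
have := comp_le_norm (u - v) i; rewrite !mxE => h.
have := vmax_ge v i.
have := ler_norm (u ord0 i - v ord0 i). lra.
Qed.

Lemma C1_cont n (t T : R) (f f' : R -> 'rV[R]_n.+1) : C1_interval t T f f' ->
  forall s, t <= s <= T -> forall e, 0 < e -> exists2 d, 0 < d &
   forall r, t <= r <= T -> `|r - s| < d -> `|f r - f s| < e.
Proof.
move=> Hf s hs e e0.
have [d1 d10 Hd1] := C1_eps Hf hs ltr01.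
set K := `|f' s| + 1.
have K0 : 0 < K by rewrite /K; have := normr_ge0 (f' s); lra.
exists (Num.min d1 (e / K)); first by rewrite lt_min d10 divr_gt0.
move=> r hr hrs.
have [->|rs] := eqVneq r s; first by rewrite subrr normr0.
have h0 : r - s != 0 by rewrite subr_eq0.
have hsr : s + (r - s) = r by rewrite addrC subrK.
have := Hd1 (r - s) h0; rewrite hsr => /(_ hr).
move: hrs; rewrite lt_min => /andP[hd1 hdk] /(_ hd1) H1.
set D := f r - f s in H1 *.
have HQ : `|(r - s)^-1 *: D| < K.
  have := ler_normD ((r - s)^-1 *: D - f' s) (f' s); rewrite subrK.
  move: H1; rewrite distrC /K => H1 H2; lra.
have -> : D = (r - s) *: ((r - s)^-1 *: D) by rewrite scalerA divff // scale1r.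
rewrite normrZ.
have : `|r - s| * `|(r - s)^-1 *: D| <= `|r - s| * K.
  by apply: ler_wpM2l => //; apply: ltW.
have : `|r - s| * K < e / K * K by rewrite ltr_pM2r.
rewrite -mulrA mulVf ?mulr1 //; last by rewrite gt_eqF.
lra.
Qed.

Lemma vmax_cont n (t T : R) (f f' : R -> 'rV[R]_n.+1) : C1_interval t T f f' ->
  forall s, t <= s <= T -> forall e, 0 < e -> exists2 d, 0 < d &
   forall r, t <= r <= T -> `|r - s| < d -> `|vmax (f r) - vmax (f s)| < e.
Proof.
move=> Hf s hs e e0.
have [d d0 Hd] := C1_cont Hf hs e0.
exists d => // r hr hrs.
have := Hd r hr hrs.
have := vmax_lip (f r) (f s); have := vmax_lip (f s) (f r).
rewrite (distrC (f s)) => H1 H2 H3.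
rewrite ltr_norml; apply/andP; split; lra.
Qed.

Lemma deriv_step n (t T : R) (f f' : R -> 'rV[R]_n.+1) : C1_interval t T f f' ->
  forall s, t <= s < T -> forall i e, 0 < e -> exists h, [/\ 0 < h, s + h <= T &
    h * (f' s ord0 i - e) < f (s + h) ord0 i - f s ord0 i].
Proof.
move=> Hf s /andP[ts sT] i e e0.
have [d d0 Hd] := C1_eps Hf (ltac:(apply/andP; split; lra) : t <= s <= T) e0.
pose h := Num.min (d / 2) (T - s).
have h0 : 0 < h by rewrite /h lt_min; apply/andP; split; lra.
have hT : h <= T - s by rewrite /h ge_min lexx orbT.
have hd : h <= d / 2 by rewrite /h ge_min lexx.
exists h; split => //; first lra.
have := Hd h (lt0r_neq0 h0) ltac:(apply/andP; split; lra) ltac:(rewrite gtr0_norm //; lra).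
move=> H1; have := le_lt_trans (comp_le_norm _ i) H1.
rewrite !mxE => H2.
have : f' s ord0 i - e < h^-1 * (f (s + h) ord0 i - f s ord0 i).
  move: H2; rewrite ltr_norml; lra.
move=> H3.
by rewrite -(ltr_pM2l h0) mulrA mulfV ?gt_eqF // mul1r in H3.
Qed.
End A.

Theorem lemma3p2 (R : realType) (n : nat) (w : 'M[R]_n.+1)
  (T C1 : R)
  (H : 'rV[R]_n.+1 -> 'M[R]_n.+1 -> 'rV[R]_n.+1)
  (B : 'rV[R]_n.+1 -> 'M[R]_n.+1 -> 'M[R]_n.+1)
  (g : 'rV[R]_n.+1 -> 'rV[R]_n.+1) (lam t : R) (mu : 'rV[R]_n.+1)
  (phi rho phi' rho' : R -> 'rV[R]_n.+1) :
  weighted_graph w -> connected_graph w ->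
  0 < T -> 0 < C1 ->
  C1_cube_skew H -> C1_cube_skew B ->
  (forall (x : 'rV[R]_n.+1) (p : 'M[R]_n.+1), in_open_cube x -> skew_symm p ->
     skew_symm (B x p)) ->
  (forall (x : 'rV[R]_n.+1) (p : 'M[R]_n.+1), in_open_cube x -> skew_symm p ->
     forall i, - C1 <= H x p ord0 i) ->
  0 <= lam <= 1 -> 0 <= t < T -> P0 mu ->
  (* (phi, rho) is a classical solution on [t, T] *)
  C1_interval t T phi phi' -> C1_interval t T rho rho' ->
  (forall s, t <= s <= T -> in_open_cube (rho s)) ->
  (forall s, t < s < T ->
     phi' s = H (rho s) (lam *: gradG w (phi s)) - lapG w (phi s)) ->
  (forall s, t < s < T ->
     rho' s = divG w (B (rho s) (lam *: gradG w (phi s))) + lapG w (rho s)) ->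
  phi T = g (rho T) -> rho t = mu ->
  forall s, t <= s <= T -> vmax (phi s) <= C1 * (T - s) + vmax (phi T).
Proof.
move=> [wsym [wdiag wpos]] _ T0 C10 _ _ _ Hlow _ /andP[t0 tT] _ Hphi _ Hrho Heq _ _ _
  s /andP[ts sT].
apply/ler_addgt0Pr => e e0.
pose eps := e / (T - t + 1).
have eps0 : 0 < eps by rewrite divr_gt0 //; lra.
have epsT : eps * (T - s) <= e.
  have -> : e = eps * (T - t + 1) by rewrite /eps mulrVK // unitfE; apply: lt0r_neq0; lra.
  by apply: ler_wpM2l; [apply: ltW|lra].
pose c := C1 + eps.
have c0 : 0 < c by rewrite /c; lra.
pose G r := vmax (phi r) + c * r.
have key : G s <= G T.
  apply: (mono_sup tT) => //; last by apply/andP.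
  - move=> r hr e1 e10.
    have e20 : 0 < e1 / 2 by lra.
    have [d1 d10 Hd1] := vmax_cont Hphi hr e20.
    exists (Num.min d1 (e1 / 2 / c)); first by rewrite lt_min d10 /= divr_gt0.
    move=> q hq; rewrite lt_min => /andP[qd1 qd2].
    have := Hd1 q hq qd1.
    have : c * `|q - r| < e1 / 2.
      by rewrite mulrC -ltr_pdivlMr.
    rewrite /G.
    have -> : vmax (phi q) + c * q - (vmax (phi r) + c * r) =
      (vmax (phi q) - vmax (phi r)) + c * (q - r) by ring.
    have := ler_normD (vmax (phi q) - vmax (phi r)) (c * (q - r)).
    rewrite normrM (gtr0_norm c0).
    lra.
  - move=> r /andP[tr rT].
    have [i Hi] := vmax_arg (phi r).
    have Hd : - C1 <= phi' r ord0 i.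
      rewrite Heq; last by apply/andP.
      rewrite !mxE.
      have : - C1 <= H (rho r) (lam *: gradG w (phi r)) ord0 i.
        apply: Hlow; first by apply: Hrho; apply/andP; split; lra.
        apply/matrixP => a b; rewrite !mxE wsym; ring.
      have : \sum_(j < n.+1) w i j * (phi r ord0 j - phi r ord0 i) <= 0.
        apply: sumr_le0 => j _; apply: mulr_ge0_le0 => //.
        by rewrite subr_le0 -Hi vmax_ge.
      lra.
    have [h [h0 hT Hh]] := deriv_step Hphi (ltac:(apply/andP; split; lra) : t <= r < T) i eps0.
    exists h; split => //.
    have M1 : h * (- C1 - eps) <= h * (phi' r ord0 i - eps).
      by apply: ler_wpM2l; [apply: ltW|lra].
    have M2 := vmax_ge (phi (r + h)) i.
    have E1 : h * (- C1 - eps) = - ((C1 + eps) * h) by ring.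
    have E2 : (C1 + eps) * (r + h) = (C1 + eps) * r + (C1 + eps) * h by ring.
    rewrite /G /c Hi E2.
    lra.
move: key; rewrite /G /c.
have -> : (C1 + eps) * T = (C1 + eps) * s + C1 * (T - s) + eps * (T - s) by ring.
lra.
Qed.
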